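(* For any time warps $f$ and $g$: $\mathrm{last}(f\circ g)=\omega$ if, and only if, $\mathrm{last}(g)=\mathrm{last}(f)=\omega$; and $\mathrm{last}(f^\star)=\omega$ if, and only if, $\mathrm{last}(f)=\omega$.
   Context: Let $\omega^+=\omega\cup\{\omega\}$. A time warp is a join-preserving map $f\colon\omega^+\to\omega^+$, time warps being ordered pointwise. $p(m)=\bigvee\{k\in\omega\mid k<m\}$; $f^\star$ is the largest time warp $h$ with $f\circ h\le p$. For a time warp $f$, $\mathrm{last}(f)=\min\{m\in\omega^+\mid f(m)=f(\omega)\}$. *)

(* Defs.v *)
From Stdlib Require Import Arith.

(* omega^+ = omega ∪ {omega} *)
Inductive omp : Type := Fin (n : nat) | Om.

Definition ole (x y : omp) : Prop :=
  match x, y with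
  | Fin m, Fin n => m <= n
  | _, Om => True
  | Om, Fin _ => False
  end.

Definition is_join (S : omp -> Prop) (x : omp) : Prop :=
  (forall y, S y -> ole y x) /\
  (forall z, (forall y, S y -> ole y z) -> ole x z).

Definition image (f : omp -> omp) (S : omp -> Prop) : omp -> Prop :=
  fun y => exists x, S x /\ f x = y.

Definition time_warp (f : omp -> omp) : Prop :=
  forall S x, is_join S x -> is_join (image f S) (f x).

Definition fle (f g : omp -> omp) : Prop := forall x, ole (f x) (g x).

(* p(m) = \/ {k in omega | k < m}, written out:
   p(0) = 0 (empty join), p(n+1) = n, p(omega) = omega *)
Definition p (m : omp) : omp :=
  match m with
  | Fin 0 => Fin 0
  | Fin (S n) => Fin n
  | Om => Om
  end.

Definition is_star (f h : omp -> omp) : Prop :=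
  time_warp h /\ fle (fun x => f (h x)) p /\
  (forall h', time_warp h' -> fle (fun x => f (h' x)) p -> fle h' h).

Definition is_last (f : omp -> omp) (m : omp) : Prop :=
  f m = f Om /\ (forall m', f m' = f Om -> ole m m').

(* Main.v *)
Require Import Defs.
From Stdlib Require Import Arith Lia Classical.

Lemma ole_refl x : ole x x.
Proof. destruct x; simpl; auto. Qed.

Lemma ole_trans x y z : ole x y -> ole y z -> ole x z.
Proof. destruct x, y, z; simpl; intros; auto; try lia; contradiction. Qed.

Lemma ole_antisym x y : ole x y -> ole y x -> x = y.
Proof. destruct x, y; simpl; intros; auto; try contradiction. f_equal; lia. Qed.

Lemma tw_mono f x y : time_warp f -> ole x y -> ole (f x) (f y).
Proof.
  intros Hf Hxy.
  assert (J : is_join (fun z => z = x \/ z = y) y).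
  { split. intros z [->| ->]; auto using ole_refl.
    intros z Hz. apply Hz. auto. }
  destruct (Hf _ _ J) as [U _]. apply U. exists x. auto.
Qed.

Lemma tw_zero f : time_warp f -> f (Fin 0) = Fin 0.
Proof.
  intros Hf.
  assert (J : is_join (fun _ => False) (Fin 0)).
  { split. intros _ []. intros z _. destruct z; simpl; auto; lia. }
  destruct (Hf _ _ J) as [_ L].
  apply ole_antisym. apply L. intros y [x [[] _]]. destruct (f (Fin 0)); simpl; auto; lia.
Qed.

Lemma tw_om f : time_warp f ->
  forall z, (forall n, ole (f (Fin n)) z) -> ole (f Om) z.
Proof.
  intros Hf z Hz.
  assert (J : is_join (fun y => exists n, y = Fin n) Om).
  { split. intros y _; destruct y; simpl; auto.
    intros z' Hz'. destruct z' as [k|]; simpl; auto.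
    specialize (Hz' (Fin (S k)) (ex_intro _ _ eq_refl)). simpl in Hz'. lia. }
  destruct (Hf _ _ J) as [_ L]. apply L.
  intros y [x [[n ->] <-]]. apply Hz.
Qed.

Lemma last_iff f : is_last f Om <-> forall n, f (Fin n) <> f Om.
Proof.
  split.
  - intros [_ H] n E. exact (H _ E).
  - intros H. split; auto. intros [n|] E; simpl; auto. exact (H n E).
Qed.

Lemma last_om f : time_warp f -> is_last f Om -> f Om = Om.
Proof.
  intros Hf HL. rewrite last_iff in HL.
  destruct (f Om) as [j|] eqn:E; auto. exfalso.
  destruct j as [|j].
  - apply (HL 0). rewrite tw_zero; auto.
  - assert (B : forall n, ole (f (Fin n)) (Fin j)).
    { intros n. assert (Hn := tw_mono f (Fin n) Om Hf I). rewrite E in Hn.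
      specialize (HL n).
      destruct (f (Fin n)) as [a|]; simpl in *; try contradiction.
      assert (a <> S j) by (intro; subst; auto). lia. }
    assert (C := tw_om f Hf _ B). rewrite E in C. simpl in C. lia.
Qed.

Lemma unbounded f : time_warp f -> f Om = Om -> (forall n, f (Fin n) <> Om) ->
  forall k, exists n, ole (Fin k) (f (Fin n)).
Proof.
  intros Hf E HN k. apply NNPP. intro NE.
  assert (B : forall n, ole (f (Fin n)) (Fin k)).
  { intros n. assert (~ ole (Fin k) (f (Fin n))) by (intro; apply NE; eauto).
    specialize (HN n). destruct (f (Fin n)); simpl in *; try contradiction; lia. }
  assert (C := tw_om f Hf _ B). rewrite E in C. exact C.
Qed.

Definition step (N : nat) (v : omp) (x : omp) : omp :=
  match x with
  | Fin n => if N <=? n then v else Fin 0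
  | Om => v
  end.

Lemma step_tw N v : 1 <= N -> time_warp (step N v).
Proof.
  intros HN SS x [U L].
  assert (mono : forall a b, ole a b -> ole (step N v a) (step N v b)).
  { intros [a|] [b|]; simpl; intros H; try contradiction.
    - destruct (N <=? a) eqn:Ea, (N <=? b) eqn:Eb;
        apply Nat.leb_le in Ea || apply Nat.leb_gt in Ea;
        apply Nat.leb_le in Eb || apply Nat.leb_gt in Eb;
        try apply ole_refl; try (simpl; lia); try (destruct v; simpl; auto; lia).
    - destruct (N <=? a); [apply ole_refl| destruct v; simpl; auto; lia].
    - apply ole_refl. }
  split.
  - intros y [w [Hw <-]]. apply mono. apply U. auto.
  - intros z Hz.
    destruct (classic (SS x)) as [Sx|NSx].
    { apply Hz. exists x. auto. }
    destruct x as [n|].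
    + destruct n as [|n].
      * simpl. destruct (N <=? 0) eqn:E; [apply Nat.leb_le in E; lia|].
        destruct z; simpl; auto; lia.
      * exfalso. assert (B : forall y, SS y -> ole y (Fin n)).
        { intros y Sy. assert (Hy := U y Sy). destruct y as [m|]; simpl in *; try contradiction.
          assert (m <> S n) by (intro; subst; auto). lia. }
        specialize (L _ B). simpl in L. lia.
    + assert (Ex : exists y, SS y /\ ole (Fin N) y).
      { apply NNPP. intro NE.
        assert (B : forall y, SS y -> ole y (Fin N)).
        { intros y Sy. assert (~ ole (Fin N) y) by (intro; apply NE; eauto).
          destruct y; simpl in *; [lia | exact (NSx Sy)]. }
        exact (L _ B). }
      destruct Ex as [y [Sy Hy]].
      assert (Hz' := Hz _ (ex_intro _ y (conj Sy eq_refl))).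
      destruct y as [m|]; simpl in *.
      * destruct (N <=? m) eqn:E; auto. apply Nat.leb_gt in E. lia.
      * auto.
Qed.

Lemma step_le f N v : time_warp f -> (forall n, N <= n -> ole (f v) (p (Fin n))) ->
  fle (fun x => f (step N v x)) p.
Proof.
  intros Hf H [n|]; simpl.
  - destruct (N <=? n) eqn:E.
    + apply Nat.leb_le in E. exact (H n E).
    + rewrite tw_zero; auto. destruct n as [|[|n]]; simpl; lia.
  - destruct (f v); simpl; auto.
Qed.

Theorem lemma2p6 :
  (forall f g : omp -> omp, time_warp f -> time_warp g ->
     (is_last (fun x => f (g x)) Om <-> (is_last g Om /\ is_last f Om)))
  /\
  (forall f fstar : omp -> omp, time_warp f -> is_star f fstar ->
     (is_last fstar Om <-> is_last f Om)).
Proof.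
  split.
  - intros f g Hf Hg. split.
    + intros H. rewrite last_iff in H.
      assert (Lg : is_last g Om).
      { rewrite last_iff. intros n E. apply (H n). simpl. rewrite E. auto. }
      split; auto.
      assert (Eg := last_om g Hg Lg).
      rewrite last_iff in Lg |- *. intros m E.
      assert (HN : forall n, g (Fin n) <> Om) by (intros n; rewrite <- Eg; auto).
      destruct (unbounded g Hg Eg HN m) as [n Hn].
      apply (H n). simpl. apply ole_antisym.
      * apply tw_mono; auto. rewrite Eg. destruct (g (Fin n)); simpl; auto.
      * rewrite Eg, <- E. apply tw_mono; auto.
    + intros [Lg Lf].
      assert (Eg := last_om g Hg Lg).
      rewrite last_iff in *. intros n E. simpl in E. rewrite Eg in E.
      destruct (g (Fin n)) as [k|] eqn:Gn.
      * exact (Lf k E).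
      * apply (Lg n). rewrite Gn, Eg. reflexivity.
  - intros f fs Hf [Hts [Hle Hmax]]. split.
    + intros Ls. assert (Es := last_om fs Hts Ls).
      rewrite last_iff in Ls |- *. intros m E.
      destruct (f Om) as [c|] eqn:Ef.
      * assert (Htw := step_tw (S c) Om ltac:(lia)).
        assert (Hl : fle (fun x => f (step (S c) Om x)) p).
        { apply step_le; auto. intros n Hn. rewrite Ef. destruct n; simpl; lia. }
        assert (Hm := Hmax _ Htw Hl (Fin (S c))). simpl in Hm.
        rewrite Nat.leb_refl in Hm.
        apply (Ls (S c)). rewrite Es. destruct (fs (Fin (S c))); simpl in Hm; tauto.
      * assert (HN : forall n, fs (Fin n) <> Om) by (intros n; rewrite <- Es; auto).
        destruct (unbounded fs Hts Es HN m) as [n Hn].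
        assert (H1 := tw_mono f _ _ Hf Hn).
        assert (H2 := ole_trans _ _ _ H1 (Hle (Fin n))).
        rewrite E in H2. destruct n as [|n]; simpl in H2; exact H2.
    + intros Lf. assert (Ef := last_om f Hf Lf). rewrite last_iff in Lf.
      assert (HF : forall n, fs (Fin n) <> Om).
      { intros n E. assert (H := Hle (Fin n)). simpl in H. rewrite E, Ef in H.
        destruct n as [|n]; simpl in H; exact H. }
      assert (Es : fs Om = Om).
      { destruct (fs Om) as [j|] eqn:Ej; auto. exfalso.
        destruct (f (Fin (S j))) as [a|] eqn:Ea;
          [| apply (Lf (S j)); rewrite Ea, Ef; reflexivity].
        assert (Htw := step_tw (S a) (Fin (S j)) ltac:(lia)).
        assert (Hl : fle (fun x => f (step (S a) (Fin (S j)) x)) p).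
        { apply step_le; auto. intros n Hn. rewrite Ea. destruct n; simpl; lia. }
        assert (Hm := Hmax _ Htw Hl (Fin (S a))). simpl in Hm.
        rewrite Nat.leb_refl in Hm.
        assert (Hm2 := tw_mono fs (Fin (S a)) Om Hts I). rewrite Ej in Hm2.
        assert (C := ole_trans _ _ _ Hm Hm2). simpl in C. lia. }
      rewrite last_iff. intros n E. apply (HF n). rewrite E; exact Es.
Qed.
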